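(* Let $b\ge 1$ and let $G$ be a graph having a proper intersection representation with axis-parallel boxes in $\mathbb{R}^b$. Then the 1-subdivision of $G$ (obtained by replacing every edge by a path of length 2) belongs to $(b+1)$-CBU.
   Context: An intersection representation of $G$ by axis-parallel boxes (products of closed intervals of positive length) in $\mathbb{R}^b$ assigns a box to each vertex so that two distinct vertices are adjacent iff their boxes intersect; it is proper if two boxes intersect if and only if some point of $\mathbb{R}^b$ belongs to these two boxes and to no other box of the representation. Let $e_1,\ldots,e_d$ be the standard basis of $\mathbb{R}^d$. For $d\ge 1$, a graph belongs to $d$-CBU if one can assign to each vertex an axis-parallel box in $\mathbb{R}^d$ such that the boxes have pairwise disjoint interiors, two distinct vertices are adjacent iff their boxes intersect, and any two intersecting boxes intersect in a $(d-1)$-dimensional box orthogonal to $e_1$. *)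

(* Defs.v *)
From Stdlib Require Import Reals.
From mathcomp Require Import all_boot.
Set Implicit Arguments. Unset Strict Implicit. Unset Printing Implicit Defensive.

Local Open Scope R_scope.

Definition point (d : nat) := 'I_d -> R.

Record box (d : nat) := Box {
  blo : 'I_d -> R;
  bhi : 'I_d -> R;
  bpos : forall i, blo i < bhi i }.

Definition in_box d (B : box d) (p : point d) : Prop :=
  forall i, blo B i <= p i <= bhi B i.

Definition in_interior d (B : box d) (p : point d) : Prop :=
  forall i, blo B i < p i < bhi B i.

Definition boxes_meet d (B C : box d) : Prop :=
  exists p, in_box B p /\ in_box C p.

Definition simple_graph (V : finType) (adj : rel V) : Prop :=
  symmetric adj /\ irreflexive adj.

Definition box_intersection_rep (T : Type) (adj : T -> T -> Prop) (b : nat)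
    (f : T -> box b) : Prop :=
  forall u v, u <> v -> (adj u v <-> boxes_meet (f u) (f v)).

Definition proper_box_rep (T : Type) (adj : T -> T -> Prop) (b : nat)
    (f : T -> box b) : Prop :=
  box_intersection_rep adj f /\
  forall u v, u <> v ->
    (boxes_meet (f u) (f v) <->
     exists p, in_box (f u) p /\ in_box (f v) p /\
               forall w, w <> u -> w <> v -> ~ in_box (f w) p).

Definition is_box_orth_e1 (d : nat) (i0 : 'I_d) (S : point d -> Prop) : Prop :=
  exists (c : R) (a bb : 'I_d -> R),
    (forall i, i != i0 -> a i < bb i) /\
    forall p, S p <-> (p i0 = c /\ forall i, i != i0 -> a i <= p i <= bb i).

(** d-CBU (d >= 1, stated for d = n.+1 so that e_1 exists; ord0 is e_1). *)
Definition CBU (n : nat) (T : Type) (adj : T -> T -> Prop) : Prop :=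
  exists f : T -> box n.+1,
    (forall u v, u <> v -> ~ exists p, in_interior (f u) p /\ in_interior (f v) p) /\
    (forall u v, u <> v -> (adj u v <-> boxes_meet (f u) (f v))) /\
    (forall u v, u <> v -> boxes_meet (f u) (f v) ->
       is_box_orth_e1 ord0 (fun p => in_box (f u) p /\ in_box (f v) p)).

(** 1-subdivision: vertices are the original vertices plus one new vertex per
    edge (an edge being a 2-set {u,v} with u ~ v); the new vertex of edge e is
    adjacent exactly to the two endpoints of e. *)
Definition is_edge (V : finType) (adj : rel V) (e : {set V}) : bool :=
  [exists u, exists v, adj u v && (e == [set u; v])].

Definition subdiv_vertex (V : finType) (adj : rel V) : Type :=
  (V + {e : {set V} | is_edge adj e})%type.

Definition subdiv_adj (V : finType) (adj : rel V)
    (x y : subdiv_vertex adj) : Prop :=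
  match x, y with
  | inl u, inr e => u \in sval e
  | inr e, inl u => u \in sval e
  | _, _ => False
  end.

(* Main.v *)
Require Import Defs.
From Stdlib Require Import Reals Lra Classical ClassicalEpsilon FunctionalExtensionality.
From mathcomp Require Import all_boot.
Set Implicit Arguments. Unset Strict Implicit. Unset Printing Implicit Defensive.
Local Open Scope R_scope.

Ltac rmm := unfold Rmin, Rmax in *; repeat destruct Rle_dec; lra.

Lemma my_choice (A B : Type) (P : A -> B -> Prop) :
  (forall x, exists y, P x y) -> exists g, forall x, P x (g x).
Proof.
move=> H; exists (fun x => proj1_sig (constructive_indefinite_description _ (H x))).
by move=> x; case: (constructive_indefinite_description _ (H x)).
Qed.

Lemma meet_iff n (B C : box n) :
  boxes_meet B C <-> forall i, blo B i <= bhi C i /\ blo C i <= bhi B i.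
Proof.
split.
- move=> [p [HB HC]] i; have := HB i; have := HC i; lra.
- move=> H; exists (fun i => Rmax (blo B i) (blo C i)); split=> i;
  have := H i; have := bpos B i; have := bpos C i; rmm.
Qed.

Lemma nomeet n (B C : box n) i :
  bhi B i < blo C i \/ bhi C i < blo B i -> ~ boxes_meet B C.
Proof. move=> H /meet_iff /(_ i); lra. Qed.

Lemma nomeet_int n (B C : box n) :
  ~ boxes_meet B C -> ~ exists p, in_interior B p /\ in_interior C p.
Proof.
move=> H [p [HB HC]]; apply: H; exists p; split=> i;
[have := HB i | have := HC i]; lra.
Qed.

Lemma int_disj n (B C : box n) i :
  bhi B i <= blo C i \/ bhi C i <= blo B i ->
  ~ exists p, in_interior B p /\ in_interior C p.
Proof. move=> H [p [HB HC]]; have := HB i; have := HC i; lra. Qed.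

Lemma orth n (B C : box n.+1) :
  (bhi B ord0 = blo C ord0 \/ bhi C ord0 = blo B ord0) ->
  (forall i, i != ord0 -> Rmax (blo B i) (blo C i) < Rmin (bhi B i) (bhi C i)) ->
  is_box_orth_e1 ord0 (fun p => in_box B p /\ in_box C p).
Proof.
move=> H0 H.
have HB0 := bpos B ord0; have HC0 := bpos C ord0.
have [c [Hc1 Hc2]] : exists c : R, (forall x : R, (blo B ord0 <= x <= bhi B ord0 /\ blo C ord0 <= x <= bhi C ord0) -> x = c) /\ (blo B ord0 <= c <= bhi B ord0 /\ blo C ord0 <= c <= bhi C ord0).
  case: H0 => E; [exists (bhi B ord0) | exists (blo B ord0)]; (split; [move=> x; lra | lra]).
exists c, (fun i => Rmax (blo B i) (blo C i)), (fun i => Rmin (bhi B i) (bhi C i)).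
split; first exact H.
move=> p; split.
- move=> [HB HC]; split.
    by apply: Hc1; have := HB ord0; have := HC ord0; lra.
  move=> i _; have := HB i; have := HC i; rmm.
- move=> [Hp Hi]; split=> i; (case: (eqVneq i ord0) => [->|/Hi]);
  [rewrite Hp; lra | rmm | rewrite Hp; lra | rmm].
Qed.

Lemma meet_of n (B C : box n.+1) :
  (bhi B ord0 = blo C ord0 \/ bhi C ord0 = blo B ord0) ->
  (forall i, i != ord0 -> Rmax (blo B i) (blo C i) < Rmin (bhi B i) (bhi C i)) ->
  boxes_meet B C /\ ~ exists p, in_interior B p /\ in_interior C p.
Proof.
move=> H0 H; split; last by apply: (int_disj (i := ord0)); lra.
apply/meet_iff => i.
case: (eqVneq i ord0) => [->|/H]; have := bpos B i; have := bpos B ord0; have := bpos C i; have := bpos C ord0; [lra | rmm].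
Qed.

Lemma meet_sym n (B C : box n) : boxes_meet B C -> boxes_meet C B.
Proof. by move=> [p [? ?]]; exists p. Qed.

Lemma fin_eps (T : finType) (P : T -> R -> Prop) :
  (forall t, exists e, 0 < e /\ forall e', 0 < e' <= e -> P t e') ->
  exists e, 0 < e /\ forall t e', 0 < e' <= e -> P t e'.
Proof.
move=> H.
suff [e [He Hs]] : exists e, 0 < e /\ forall t, t \in enum T -> forall e', 0 < e' <= e -> P t e'.
  by exists e; split=> // t; apply: Hs; rewrite mem_enum.
elim: (enum T) => [|t s [e [He Hs]]]; first by exists 1; split=> //; lra.
have [e1 [He1 Ht]] := H t.
exists (Rmin e e1); split; first by rmm.
move=> t'; rewrite in_cons => /orP [/eqP ->|Hin] e' He'.
  by apply: Ht; rmm.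
by apply: Hs => //; rmm.
Qed.

Definition mkbox n (l h : R) (lo hi : 'I_n -> R) (Hlh : l < h)
  (Hlo : forall j, lo j < hi j) : box n.+1.
Proof.
refine (@Box n.+1 (fun i => match unlift ord0 i with Some j => lo j | None => l end)
                  (fun i => match unlift ord0 i with Some j => hi j | None => h end) _).
move=> i; case: (unlift ord0 i) => [j|] //.
Defined.

Lemma mk0 n l h lo hi Hlh Hlo :
  blo (@mkbox n l h lo hi Hlh Hlo) ord0 = l /\ bhi (@mkbox n l h lo hi Hlh Hlo) ord0 = h.
Proof. by rewrite /= unlift_none. Qed.

Lemma mkS n l h lo hi Hlh Hlo j :
  blo (@mkbox n l h lo hi Hlh Hlo) (lift ord0 j) = lo j /\
  bhi (@mkbox n l h lo hi Hlh Hlo) (lift ord0 j) = hi j.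
Proof. by rewrite /= liftK. Qed.

Lemma ord_split n (i : 'I_n.+1) : i != ord0 -> exists j, i = lift ord0 j.
Proof. by case: (unliftP ord0 i) => [j ->|->]; [exists j | rewrite eqxx]. Qed.

Lemma mk0l n l h lo hi Hlh Hlo : blo (@mkbox n l h lo hi Hlh Hlo) ord0 = l.
Proof. by rewrite /= unlift_none. Qed.
Lemma mk0h n l h lo hi Hlh Hlo : bhi (@mkbox n l h lo hi Hlh Hlo) ord0 = h.
Proof. by rewrite /= unlift_none. Qed.
Lemma mkSl n l h lo hi Hlh Hlo j : blo (@mkbox n l h lo hi Hlh Hlo) (lift ord0 j) = lo j.
Proof. by rewrite /= liftK. Qed.
Lemma mkSh n l h lo hi Hlh Hlo j : bhi (@mkbox n l h lo hi Hlh Hlo) (lift ord0 j) = hi j.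
Proof. by rewrite /= liftK. Qed.

Lemma rk_sep (V : finType) (u v : V) : u <> v ->
  INR (enum_rank u) + 1 <= INR (enum_rank v) \/ INR (enum_rank v) + 1 <= INR (enum_rank u).
Proof.
move=> n.
have Hne : (nat_of_ord (enum_rank u)) <> (nat_of_ord (enum_rank v)).
  by move/ord_inj/enum_rank_inj.
destruct (Nat.lt_total (enum_rank u) (enum_rank v)) as [h|[h|h]].
- by left; rewrite -S_INR; apply: le_INR.
- by [].
- by right; rewrite -S_INR; apply: le_INR.
Qed.

Unset Implicit Arguments.
Theorem mainTheorem2 (b : nat) (hb : (1 <= b)%nat) (V : finType) (adj : rel V)
  (hG : simple_graph adj)
  (hrep : exists f : V -> box b, proper_box_rep (fun u v => adj u v) f) :
  CBU b (@subdiv_adj V adj).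
Proof.
case: hrep => f [Hrep Hprop].
case: hG => Hsym Hirr.
have adj_neq : forall u v, adj u v -> u <> v.
  by move=> u v h E; move: h; rewrite E Hirr.
have [q Hq] : exists q : V * V -> point b, forall uv, adj uv.1 uv.2 ->
   in_box (f uv.1) (q uv) /\ in_box (f uv.2) (q uv) /\
   forall w, w <> uv.1 -> w <> uv.2 -> ~ in_box (f w) (q uv).
  apply: (my_choice (P := fun uv p => adj uv.1 uv.2 ->
   in_box (f uv.1) p /\ in_box (f uv.2) p /\
   forall w, w <> uv.1 -> w <> uv.2 -> ~ in_box (f w) p)) => -[u v] /=.
  case: (classic (adj u v)) => h; last by exists (fun _ => 0).
  have [p [H1 [H2 H3]]] := proj1 (Hprop u v (adj_neq _ _ h)) (proj1 (Hrep u v (adj_neq _ _ h)) h).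
  by exists p.
have [ends Hends] : exists ends : {e : {set V} | is_edge adj e} -> V * V,
    forall x, adj (ends x).1 (ends x).2 /\ sval x = [set (ends x).1; (ends x).2].
  apply: (my_choice (P := fun x uv => adj uv.1 uv.2 /\ sval x = [set uv.1; uv.2])).
  move=> -[e He] /=.
  move: He => /existsP [u /existsP [v /andP [h /eqP E]]].
  by exists (u, v).
have mem : forall uv uv', adj uv.1 uv.2 -> adj uv'.1 uv'.2 -> q uv = q uv' ->
    uv'.1 \in [set uv.1; uv.2] /\ uv'.2 \in [set uv.1; uv.2].
  move=> uv uv' h h' Eq.
  have [A1 [A2 A3]] := Hq _ h; have [B1 [B2 B3]] := Hq _ h'.
  rewrite !in_set2; split.
    case: (eqVneq uv'.1 uv.1) => [//|/eqP n1]; case: (eqVneq uv'.1 uv.2) => [//|/eqP n2].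
    by exfalso; apply: (A3 _ n1 n2); rewrite Eq.
  case: (eqVneq uv'.2 uv.1) => [//|/eqP n1]; case: (eqVneq uv'.2 uv.2) => [//|/eqP n2].
  by exfalso; apply: (A3 _ n1 n2); rewrite Eq.
have Hqd : forall x y, x <> y -> q (ends x) <> q (ends y).
  move=> x y Hxy E.
  case: (Hends x) => hx Ex; case: (Hends y) => hy Ey.
  have [m1 m2] := mem _ _ hx hy E.
  have [m3 m4] := mem _ _ hy hx (esym E).
  apply: Hxy; apply: val_inj; rewrite /= Ex Ey.
  by apply/eqP; rewrite eqEsubset !subUset !sub1set m1 m2 m3 m4.
have [|e1 [He1 HC1]] := fin_eps (T := (V * V * V)%type)
  (P := fun t e => adj t.1.1 t.1.2 -> t.2 <> t.1.1 -> t.2 <> t.1.2 ->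
      exists i, q t.1 i + e < blo (f t.2) i \/ bhi (f t.2) i < q t.1 i - e).
  move=> [[u v] w] /=.
  case: (classic (adj u v /\ w <> u /\ w <> v)) => [[h [n1 n2]]|hn]; last first.
    by exists 1; split; [lra | move=> e' _ h n1 n2; exfalso; exact: hn].
  have [_ [_ H3]] := Hq (u,v) h.
  have := H3 w n1 n2; rewrite /in_box => /not_all_ex_not [i Hi].
  case: (Rlt_or_le (q (u,v) i) (blo (f w) i)) => hl.
    exists ((blo (f w) i - q (u,v) i)/2); split; first lra.
    by move=> e' He' _ _ _; exists i; left; lra.
  have hh : bhi (f w) i < q (u,v) i.
    by apply: Rnot_le_lt => h'; apply: Hi; split.
  exists ((q (u,v) i - bhi (f w) i)/2); split; first lra.
  by move=> e' He' _ _ _; exists i; right; lra.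
have [|e2 [He2 HC2]] := fin_eps (T := (V * V * (V * V))%type)
  (P := fun t e => q t.1 <> q t.2 ->
      exists i, q t.1 i + e < q t.2 i - e \/ q t.2 i + e < q t.1 i - e).
  move=> [s t] /=.
  case: (classic (q s = q t)) => h.
    by exists 1; split; [lra | move=> e' _ h'; exfalso; exact: h'].
  have [i Hi] : exists i, q s i <> q t i.
    apply: NNPP => H; apply: h; apply: functional_extensionality => i.
    by apply: NNPP => H'; apply: H; exists i.
  case: (Rtotal_order (q s i) (q t i)) => [hl|[hl|hl]]; last 2 first.
  - by [].
  - exists ((q s i - q t i)/3); split; first lra.
    by move=> e' He' _; exists i; right; lra.
  exists ((q t i - q s i)/3); split; first lra.
  by move=> e' He' _; exists i; left; lra.
pose eps := Rmin e1 e2.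
have Heps : 0 < eps by rewrite /eps; rmm.
have Heps1 : 0 < eps <= e1 by rewrite /eps; rmm.
have Heps2 : 0 < eps <= e2 by rewrite /eps; rmm.
pose rk (v : V) := INR (enum_rank v).
have Hvlt : forall v, 2 * rk v < 2 * rk v + 1 by move=> v; lra.
have Helt : forall x, 2 * Rmin (rk (ends x).1) (rk (ends x).2) + 1 <
                      2 * Rmax (rk (ends x).1) (rk (ends x).2).
  move=> x; have := rk_sep (adj_neq _ _ (proj1 (Hends x))); rewrite /rk; rmm.
have Hqlt : forall x (j : 'I_b), q (ends x) j - eps < q (ends x) j + eps by move=> *; lra.
pose F := fun s : subdiv_vertex adj => match s with
  | inl v => @mkbox b _ _ (blo (f v)) (bhi (f v)) (Hvlt v) (bpos (f v))
  | inr x => @mkbox b _ _ (fun j => q (ends x) j - eps) (fun j => q (ends x) j + eps)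
                (Helt x) (Hqlt x) end.
have K1 : forall u v, u <> v -> ~ boxes_meet (F (inl u)) (F (inl v)).
  move=> u v n; apply: (nomeet (i := ord0)); rewrite /F !mk0l !mk0h.
  by case: (rk_sep n) => h; [left | right]; rewrite /rk; lra.
have K2 : forall x y, x <> y -> ~ boxes_meet (F (inr x)) (F (inr y)).
  move=> x y n; have /= [i Hi] := HC2 (ends x, ends y) eps Heps2 (Hqd x y n).
  apply: (nomeet (i := lift ord0 i)); rewrite /F !mkSl !mkSh.
  by case: Hi => ?; [left | right]; lra.
have K3 : forall w (x : {e : {set V} | is_edge adj e}), w \notin sval x -> ~ boxes_meet (F (inl w)) (F (inr x)).
  move=> w x; case: (Hends x) => h Ex.
  rewrite Ex in_set2 negb_or => /andP [/eqP n1 /eqP n2].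
  have /= [i Hi] := HC1 ((ends x), w) eps Heps1 h n1 n2.
  apply: (nomeet (i := lift ord0 i)); rewrite /F !mkSl !mkSh.
  by case: Hi => ?; [right | left]; lra.
have K4 : forall w (x : {e : {set V} | is_edge adj e}), w \in sval x ->
   (bhi (F (inl w)) ord0 = blo (F (inr x)) ord0 \/ bhi (F (inr x)) ord0 = blo (F (inl w)) ord0) /\
   (forall i, i != ord0 -> Rmax (blo (F (inl w)) i) (blo (F (inr x)) i) <
                          Rmin (bhi (F (inl w)) i) (bhi (F (inr x)) i)).
  move=> w x; case: (Hends x) => h Ex.
  rewrite Ex in_set2 => Hw; split.
    rewrite /F !mk0l !mk0h; have := rk_sep (adj_neq _ _ h); rewrite /rk.
    by case/orP: Hw => /eqP -> [] hs; [left|right|right|left]; rmm.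
  move=> i /ord_split [j ->]; rewrite /F !mkSl !mkSh.
  have Hin : in_box (f w) (q (ends x)).
    by case/orP: Hw => /eqP ->; have := Hq _ h; tauto.
  by have := Hin j; have := bpos (f w) j; rmm.
exists F; split; [|split].
- move=> [u|x] [v|y] n.
  + by apply/nomeet_int/K1 => E; apply: n; rewrite E.
  + case: (boolP (u \in sval y)) => Hm.
      by have [H1 H2] := K4 _ _ Hm; have [_ ?] := meet_of H1 H2.
    exact/nomeet_int/K3.
  + move=> [p [A B]].
    case: (boolP (v \in sval x)) => Hm.
      have [H1 H2] := K4 _ _ Hm; have [_ H] := meet_of H1 H2.
      by apply: H; exists p.
    by apply: (nomeet_int (K3 _ _ Hm)); exists p.
  + by apply/nomeet_int/K2 => E; apply: n; rewrite E.
- move=> [u|x] [v|y] n /=.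
  + by split=> [[]|]; apply/K1 => E; apply: n; rewrite E.
  + split; move=> Hm.
      by have [H1 H2] := K4 _ _ Hm; have [? _] := meet_of H1 H2.
    by apply: NNPP => Hn; apply: (K3 u y) => //; apply/negP.
  + split; move=> Hm.
      by have [H1 H2] := K4 _ _ Hm; have [? _] := meet_of H1 H2; apply: meet_sym.
    by apply: NNPP => Hn; apply: (K3 v x); [apply/negP | apply: meet_sym].
  + by split=> [[]|]; apply/K2 => E; apply: n; rewrite E.
- move=> [u|x] [v|y] n Hm.
  + by exfalso; apply: (K1 u v) => // E; apply: n; rewrite E.
  + case: (boolP (u \in sval y)) => Hu.
      by have [H1 H2] := K4 _ _ Hu; apply: orth.
    by exfalso; apply: (K3 u y).
  + case: (boolP (v \in sval x)) => Hv.
      have [H1 H2] := K4 _ _ Hv; apply: orth.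
        by case: H1; [right | left].
      by move=> i /H2; rewrite Rmax_comm Rmin_comm.
    by exfalso; apply: (K3 v x) => //; apply: meet_sym.
  + by exfalso; apply: (K2 x y) => // E; apply: n; rewrite E.
Qed.
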